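(* For every integer $k\ge 1$, the complete multipartite graph $K_{1*k,2*(k-1)}$ (with $k$ parts of size $1$ and $k-1$ parts of size $2$) has m-number $m(K_{1*k,2*(k-1)})=k+1$.
   Context: All graphs are finite, simple and undirected. A list assignment $L$ for a graph $G$ assigns to each vertex $v$ a set $L(v)$ of colors; an $L$-coloring is a proper vertex coloring $c$ of $G$ with $c(v)\in L(v)$ for every vertex $v$. A $k$-list assignment is a list assignment with $|L(v)|=k$ for all $v$. $G$ is uniquely $k$-list colorable (U$k$LC) if there exists a $k$-list assignment $L$ such that $G$ has exactly one $L$-coloring. $G$ has property $M(k)$ if it is not U$k$LC, i.e. for every $k$-list assignment $L$, $G$ has either no $L$-coloring or at least two $L$-colorings. The m-number $m(G)$ is the least integer $k\ge 1$ such that $G$ has property $M(k)$. (Every U$k$LC graph is also U$(k-1)$LC, so $G$ is U$k$LC iff $k<m(G)$.) *)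

(* Defs.v *)
From mathcomp Require Import all_boot.
Set Implicit Arguments. Unset Strict Implicit. Unset Printing Implicit Defensive.

Definition simple_graph (T : finType) (adj : rel T) : Prop :=
  symmetric adj /\ irreflexive adj.

Definition k_list_assignment (T : finType) (k : nat) (L : T -> seq nat) : Prop :=
  forall v, uniq (L v) /\ size (L v) = k.

Definition L_coloring (T : finType) (adj : rel T) (L : T -> seq nat)
  (c : T -> nat) : Prop :=
  (forall v, c v \in L v) /\ (forall u v, adj u v -> c u != c v).

Definition unique_L_coloring (T : finType) (adj : rel T) (L : T -> seq nat) : Prop :=
  exists c, L_coloring adj L c /\
    forall c', L_coloring adj L c' -> forall v, c' v = c v.

Definition UkLC (T : finType) (adj : rel T) (k : nat) : Prop :=
  exists L : T -> seq nat, k_list_assignment k L /\ unique_L_coloring adj L.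

Definition property_M (T : finType) (adj : rel T) (k : nat) : Prop :=
  ~ UkLC adj k.

Definition is_m_number (T : finType) (adj : rel T) (m : nat) : Prop :=
  1 <= m /\ property_M adj m /\
  forall j, 1 <= j -> j < m -> ~ property_M adj j.

(* Complete multipartite graph K_{1*k, 2*(k-1)}: vertices are 'I_k (the k
   singleton parts) plus pairs (j, b) with j : 'I_(k-1), b : bool (the k-1
   parts of size 2, part j = {(j,false),(j,true)}). *)
Definition Kvert (k : nat) : finType := ('I_k + ('I_k.-1 * bool))%type.

Definition Kpart (k : nat) (x : Kvert k) : 'I_k + 'I_k.-1 :=
  match x with
  | inl i => inl i
  | inr p => inr p.1
  end.

Definition Kadj (k : nat) : rel (Kvert k) := fun x y => Kpart x != Kpart y.

(* Main.v *)
Require Import Defs.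
From mathcomp Require Import all_boot zify.
Set Implicit Arguments. Unset Strict Implicit. Unset Printing Implicit Defensive.

Section Key.
Variable T : finType.

Lemma perm_ex n : forall (S : {set T}) (H : T -> T), #|S| <= n ->
  (forall u, u \in S -> (H u \in S) && (H u != u)) ->
  forall u1, u1 \in S ->
  exists g : T -> T, [/\ {in S &, injective g},
     (forall u, u \in S -> g u \in S /\ (g u = u \/ g u = H u)) &
     exists2 u0, u0 \in S & g u0 != u0].
Proof.
elim: n => [|n IH] S H HS hyp u1 u1S.
  by move: HS; rewrite leqn0 => /eqP/cards0_eq S0; rewrite S0 inE in u1S.
case: (boolP [exists x in S, [forall u in S, H u != x]]).
  case/existsP => x /andP[xS /forallP Hx].
  have Hx' : forall u, u \in S -> H u != x by move=> u uS; have := Hx u; rewrite uS.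
  have HS' : #|S :\ x| <= n.
    by move: HS; rewrite (cardsD1 x S) xS add1n ltnS.
  have hyp' : forall u, u \in S :\ x -> (H u \in S :\ x) && (H u != u).
    move=> u; rewrite !inE => /andP[ux uS]; case/andP: (hyp u uS) => -> ->.
    by rewrite Hx' // andbT.
  have u1' : H x \in S :\ x by rewrite !inE; case/andP: (hyp x xS) => -> ->.
  have [g' [ginj grng [u0 u0S gu0]]] := IH _ _ HS' hyp' _ u1'.
  exists (fun u => if u == x then x else g' u); split.
  - move=> u v uS vS /=.
    case: (eqVneq u x) => [->|ux]; case: (eqVneq v x) => [->|vx] //.
    + have := grng v; rewrite !inE vx vS => /(_ isT) [] /andP[gx _] _ ex.
      by rewrite ex eqxx in gx.
    + have := grng u; rewrite !inE ux uS => /(_ isT) [] /andP[gx _] _ ex.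
      by rewrite -ex eqxx in gx.
    + by apply: ginj; rewrite !inE ?ux ?vx ?uS ?vS.
  - move=> u uS /=; case: (eqVneq u x) => [->|ux]; first by split; [|left].
    have := grng u; rewrite !inE ux uS => /(_ isT) [] /andP[_ gS] h.
    by split.
  - exists u0; first by move: u0S; rewrite !inE => /andP[].
    by move: u0S; rewrite !inE => /andP[/negbTE -> _].
move/existsPn => Hn.
have sub1 : S \subset [set H u | u in S].
  apply/subsetP => x xS; have := Hn x; rewrite xS /= => /forallPn [u].
  rewrite negb_imply negbK => /andP[uS /eqP <-]; exact: imset_f.
have sub2 : [set H u | u in S] \subset S.
  by apply/subsetP => y /imsetP [u uS ->]; case/andP: (hyp u uS).
have ceq : #|[set H u | u in S]| == #|S|.
  by rewrite eqn_leq (subset_leq_card sub2) (subset_leq_card sub1).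
exists H; split.
- exact/imset_injP.
- by move=> u uS; case/andP: (hyp u uS) => -> _; split; [|right].
- by exists u1 => //; case/andP: (hyp u1 u1S).
Qed.


Definition Pr (D : {set T}) (c : T -> nat) : {set T} :=
  [set v in D | [exists u in D, (u != v) && (c u == c v)]].

Definition Huniq (D : {set T}) (L : T -> seq nat) (c : T -> nat) : Prop :=
  forall c' : T -> nat, (forall v, v \in D -> c' v \in L v) ->
    (forall u v, u \in D -> v \in D -> c u != c v -> c' u != c' v) ->
    forall v, v \in D -> c' v = c v.

Lemma inC (D : {set T}) (L : T -> seq nat) (c : T -> nat) : (forall v, v \in D -> c v \in L v) -> Huniq D L c ->
  forall w y, w \in D -> y \in L w -> exists2 u, u \in D & c u = y.
Proof.
move=> HL HU w y wD yL.
case: (boolP [exists u in D, c u == y]).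
  by case/existsP => u /andP[uD /eqP <-]; exists u.
move/existsPn => Hn.
have Hn' : forall u, u \in D -> c u != y by move=> u uD; have := Hn u; rewrite uD.
have := HU (fun v => if v == w then y else c v).
have h1 : forall v, v \in D -> (if v == w then y else c v) \in L v.
  by move=> v vD; case: (eqVneq v w) => [->|_] //; exact: HL.
have h2 : forall u v, u \in D -> v \in D -> c u != c v ->
   (if u == w then y else c u) != (if v == w then y else c v).
  move=> u v uD vD; case: (eqVneq u w) => [->|_]; case: (eqVneq v w) => [->|_] //.
  - by rewrite eqxx.
  - by move=> _; rewrite eq_sym Hn'.
  - by move=> _; rewrite Hn'.
move=> /(_ h1 h2 w wD); rewrite eqxx => ey.
by exists w => //.
Qed.

Lemma two_elems (s : seq nat) x : uniq s -> 2 <= size s -> exists2 y, y \in s & y != x.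
Proof.
move=> us ss; case: (boolP (has (fun y => y != x) s)).
  by case/hasP => y ys yx; exists y.
move/hasPn => H.
have : size s <= size [:: x].
  apply: uniq_leq_size => // y ys; have := H y ys; rewrite negbK inE => ->.
  done.
by move=> /= h; move: ss; rewrite ltnNge h.
Qed.


Lemma key r : forall (D : {set T}) (c : T -> nat) (L : T -> seq nat),
  (forall v, v \in D -> uniq (L v) /\ r <= size (L v)) ->
  (forall v, v \in D -> c v \in L v) -> Huniq D L c ->
  forall w0, w0 \in D -> (r.-1).*2 <= #|Pr D c|.
Proof.
elim: r => [|r IH] D c L HS HL HU w0 w0D; first done.
case: r IH HS => [|r] IH HS; first done.
rewrite [(r.+2).-1]/=.
case: (boolP [forall w in D, [exists u in D, (c u != c w) &&
           [forall v in D, (c v == c w) ==> (c u \in L v)]]]).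
  move/forallP => Hall.
  have Hb : forall w, w \in D -> [exists u in D, (c u != c w) &&
           [forall v in D, (c v == c w) ==> (c u \in L v)]].
    by move=> w wD; have := Hall w; rewrite wD.
  pose rep' (x : nat) := odflt w0 [pick u in D | c u == x].
  have repP : forall w, w \in D -> (rep' (c w) \in D) /\ c (rep' (c w)) = c w.
    move=> w wD; rewrite /rep'; case: pickP => [u /andP[uD /eqP]|] //=.
    by move=> /(_ w); rewrite wD eqxx.
  pose h w := odflt w [pick u in D | (c u != c w) &&
           [forall v in D, (c v == c w) ==> (c u \in L v)]].
  have hP : forall w, w \in D -> [/\ h w \in D, c (h w) != c w &
       forall v, v \in D -> c v = c w -> c (h w) \in L v].
    move=> w wD; rewrite /h; case: pickP => [u /and3P[uD cu /forallP F]|] /=.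
      by split=> // v vD cv; have := F v; rewrite vD cv eqxx.
    move=> Hn; case/existsP: (Hb w wD) => u Hu.
    by have := Hn u; rewrite Hu.
  pose S := [set u in D | rep' (c u) == u].
  pose HH u := rep' (c (h u)).
  have SP : forall u, u \in S -> (u \in D) /\ rep' (c u) = u.
    by move=> u; rewrite inE => /andP[? /eqP].
  have Sinj : forall a b, a \in S -> b \in S -> c a = c b -> a = b.
    by move=> a b /SP[_ ea] /SP[_ eb] e; rewrite -ea -eb e.
  have RS : forall v, v \in D -> rep' (c v) \in S.
    by move=> v vD; have [rD rc] := repP v vD; rewrite inE rD rc eqxx.
  have hypH : forall u, u \in S -> (HH u \in S) && (HH u != u).
    move=> u /SP[uD eu]; have [hD hc _] := hP u uD.
    have [rD rc] := repP _ hD.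
    rewrite RS //=; apply/eqP => e.
    have : c (HH u) = c u by rewrite e.
    by rewrite /HH rc => ec; rewrite ec eqxx in hc.
  have [g [ginj grng [u0 u0S gu0]]] := perm_ex (leqnn _) hypH (RS w0 w0D).
  pose c'' v := c (g (rep' (c v))).
  have h1 : forall v, v \in D -> c'' v \in L v.
    move=> v vD; have rS := RS v vD; have [gS [e|e]] := grng _ rS; rewrite /c'' e.
    - by have [_ ->] := repP v vD; exact: HL.
    - rewrite /HH; have [rD rc] := repP v vD; have [hD _ hL] := hP _ rD.
      have [_ ->] := repP _ hD; apply: hL => //.
  have h2 : forall u v, u \in D -> v \in D -> c u != c v -> c'' u != c'' v.
    move=> u v uD vD cuv; apply/eqP => e.
    have er := Sinj _ _ (proj1 (grng _ (RS u uD))) (proj1 (grng _ (RS v vD))) e.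
    have er2 := ginj _ _ (RS u uD) (RS v vD) er.
    have [_ cu] := repP u uD; have [_ cv] := repP v vD.
    by move: cuv; rewrite -cu -cv er2 eqxx.
  have := HU c'' h1 h2 u0 (proj1 (SP _ u0S)).
  rewrite /c'' (proj2 (SP _ u0S)) => e.
  have := Sinj _ _ (proj1 (grng _ u0S)) u0S e.
  by move/eqP; rewrite (negbTE gu0).
move/forallPn => [w]; rewrite negb_imply => /andP[wD nb].
have H2 : 2 <= size (L w) by apply: leq_trans (proj2 (HS w wD)).
have [y yL yx] := two_elems (c w) (proj1 (HS w wD)) H2.
have [u uD cuy] := inC HL HU wD yL.
move/existsPn: nb => nb.
have := nb u; rewrite uD cuy yx /= => /forallPn [v].
rewrite !negb_imply => /and3P[vD /eqP cvw yv].
have vw : v != w by apply/eqP => e; rewrite e yL in yv.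
pose D' := [set z in D | c z != c w].
pose L' z := [seq t <- L z | t != c w].
have HS' : forall z, z \in D' -> uniq (L' z) /\ r.+1 <= size (L' z).
  move=> z; rewrite inE => /andP[zD _]; have [uz sz] := HS z zD.
  split; first exact: filter_uniq.
  rewrite size_filter.
  have -> : count (fun t => t != c w) (L z) = count (predC (pred1 (c w))) (L z).
    by apply: eq_count.
  have := count_predC (pred1 (c w)) (L z).
  have := count_uniq_mem (c w) uz.
  have := leq_b1 (c w \in L z).
  rewrite /=. lia.
have HL' : forall z, z \in D' -> c z \in L' z.
  by move=> z; rewrite inE mem_filter => /andP[zD ->]; rewrite HL.
have HU' : Huniq D' L' c.
  move=> c' g1 g2 z zD'.
  pose c2 t := if c t == c w then c w else c' t.
  have k1 : forall t, t \in D -> c2 t \in L t.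
    move=> t tD; rewrite /c2; case: eqP => [e|ne]; first by rewrite -e HL.
    have : t \in D' by rewrite inE tD; apply/eqP.
    by move/g1; rewrite mem_filter => /andP[].
  have k2 : forall t1 t2, t1 \in D -> t2 \in D -> c t1 != c t2 -> c2 t1 != c2 t2.
    move=> t1 t2 t1D t2D ne; rewrite /c2.
    case: (eqVneq (c t1) (c w)) => e1; case: (eqVneq (c t2) (c w)) => e2.
    - by rewrite e1 e2 eqxx in ne.
    - have : t2 \in D' by rewrite inE t2D e2.
      by move/g1; rewrite mem_filter eq_sym => /andP[].
    - have : t1 \in D' by rewrite inE t1D e1.
      by move/g1; rewrite mem_filter => /andP[].
    - by apply: g2 => //; rewrite inE ?t1D ?t2D ?e1 ?e2.
  move: (zD'); rewrite inE => /andP[zD czw].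
  have := HU c2 k1 k2 z zD; rewrite /c2 (negbTE czw) => //.
have uD' : u \in D' by rewrite inE uD cuy.
have IHr := IH D' c L' HS' HL' HU' u uD'.
rewrite [(r.+1).-1]/= in IHr.
have sub1 : Pr D' c \subset Pr D c :\: [set w; v].
  apply/subsetP => z; rewrite inE => /andP[zD' /existsP[t /and3P[tD' tz ctz]]].
  move: zD' tD'; rewrite !inE => /andP[zD czw] /andP[tD _].
  rewrite zD /=.
  apply/andP; split.
    apply/negP => /orP[/eqP ez|/eqP ez]; move: czw; rewrite ez ?cvw eqxx //.
  by apply/existsP; exists t; rewrite tD tz ctz.
have sub2 : [set w; v] \subset Pr D c.
  apply/subsetP => z; rewrite !inE => /orP[/eqP->|/eqP->].
  - rewrite wD /=; apply/existsP; exists v; by rewrite vD vw cvw eqxx.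
  - rewrite vD /=; apply/existsP; exists w; by rewrite wD eq_sym vw cvw eqxx.
have := cardsID [set w; v] (Pr D c).
rewrite (setIidPr sub2) cards2 eq_sym vw.
have := subset_leq_card sub1.
lia.
Qed.

End Key.
Lemma shrinkU (T : finType) (adj : rel T) k j : 1 <= j -> j <= k -> UkLC adj k -> UkLC adj j.
Proof.
move=> j1 jk [L [HL [c [[cL cP] cU]]]].
exists (fun v => c v :: take j.-1 (rem (c v) (L v))); split.
  move=> v; have [uL sL] := HL v; split.
    rewrite /= take_uniq ?rem_uniq // andbT.
    apply/negP => /mem_take; rewrite mem_rem_uniq // inE eqxx //.
  rewrite /= size_take size_rem ?cL // sL.
  case: ifP; lia.
exists c; split.
  by split => // v; rewrite inE eqxx.
move=> c' [c'L c'P]; apply: cU; split => // v.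
have := c'L v; rewrite inE => /orP[/eqP ->|]; first exact: cL.
by move/mem_take/mem_rem.
Qed.

Definition Kc k (x : Kvert k) : nat :=
  match x with inl i => k.-1 + i | inr p => nat_of_ord p.1 end.

Definition KL k (x : Kvert k) : seq nat :=
  match x with
  | inl i => (k.-1 + i) :: iota 0 k.-1
  | inr (j, false) => (j : nat) :: iota k.-1 k.-1
  | inr (j, true) => (j : nat) :: (k.-1 + k.-1) :: [seq t <- iota 0 k.-1 | t != nat_of_ord j]
  end.

Lemma KL_assign k : 1 <= k -> k_list_assignment k (@KL k).
Proof.
move=> k1 [i|[j []]] /=.
- rewrite iota_uniq mem_iota size_iota andbT; split; [apply/negP|]; lia.
- have := ltn_ord j; rewrite filter_uniq ?iota_uniq // andbT !inE mem_filter mem_iota eqxx /=.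
  rewrite size_filter.
  have -> : count (fun t => t != nat_of_ord j) (iota 0 k.-1) = count (predC (pred1 (j:nat))) (iota 0 k.-1).
    by apply: eq_count.
  have := count_predC (pred1 (j:nat)) (iota 0 k.-1).
  have := count_uniq_mem (j:nat) (iota_uniq 0 k.-1).
  rewrite mem_iota size_iota /= => -> hj; split; [apply/andP; split; [apply/negP|]|]; try lia.
  by rewrite mem_filter mem_iota; apply/negP => /andP[_]; lia.
- have := ltn_ord j; rewrite iota_uniq mem_iota size_iota andbT; split; [apply/negP|]; lia.
Qed.

Lemma Kc_col k : L_coloring (@Kadj k) (@KL k) (@Kc k).
Proof.
split; first by move=> [i|[j []]]; rewrite /= inE eqxx.
move=> [i|[j b]] [i'|[j' b']]; rewrite /Kadj /Kpart /=.
- by apply: contra => /eqP h; apply/eqP; congr inl; apply: val_inj => /=; lia.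
- by move=> _; have := ltn_ord j'; apply: contraL => /eqP <-; lia.
- by move=> _; have := ltn_ord j; apply: contraL => /eqP ->; lia.
- by apply: contra => /eqP h; apply/eqP; congr inr; apply: val_inj.
Qed.

Lemma Kc_uniq k (c' : Kvert k -> nat) : 1 <= k -> L_coloring (@Kadj k) (@KL k) c' ->
  forall v, c' v = Kc v.
Proof.
move=> k1 [cL cP].
have bnd : forall v, c' v < k.-1 + k.
  move=> [i|[j []]].
  - have := cL (inl i); rewrite /= inE mem_iota => /orP[/eqP ->|]; have := ltn_ord i; lia.
  - have := cL (inr (j, true)); rewrite /= !inE mem_filter mem_iota.
    have := ltn_ord j; move=> hj /orP[/eqP ->|/orP[/eqP ->|]]; lia.
  - have := cL (inr (j, false)); rewrite /= !inE mem_iota.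
    have := ltn_ord j; move=> hj /orP[/eqP ->|]; lia.
pose rp (p : ('I_k + 'I_k.-1)%type) : Kvert k :=
  match p with inl i => inl i | inr j => inr (j, false) end.
pose phi p := Ordinal (bnd (rp p)).
have phi_inj : injective phi.
  move=> p q /(congr1 val) /= e; apply/eqP; apply: contraT => npq.
  have : Kadj (rp p) (rp q).
    move: npq; case: p {e} => [i|j]; case: q => [i'|j'] //=; rewrite /Kadj /=;
      apply: contra => /eqP [] ->; done.
  by move/cP; rewrite e eqxx.
have onto : forall y, y < k.-1 + k -> exists p, c' (rp p) = y.
  move=> y hy.
  have hc : #|{: 'I_(k.-1 + k)}| <= #|{: ('I_k + 'I_k.-1)%type}|.
    by rewrite card_sum !card_ord addnC.
  have := @inj_card_onto _ _ phi phi_inj hc (Ordinal hy); move=> /codomP [p /(congr1 val) /= e].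
  by exists p.
have pairs : forall j : 'I_k.-1, forall b, c' (inr (j, b)) = j.
  move=> j.
  have e : c' (inr (j, true)) = c' (inr (j, false)).
    have [p ep] := onto _ (bnd (inr (j, true))).
    case: p ep => [i|j'] /= ep.
      have : Kadj (inl i) (inr (j, true)) by [].
      by move/cP; rewrite ep eqxx.
    case: (eqVneq j' j) => [ejj|njj]; first by rewrite -ep ejj.
    have : Kadj (inr (j', false)) (inr (j, true)) by rewrite /Kadj /= (inj_eq (@inr_inj _ _)).
    by move/cP; rewrite ep eqxx.
  have h1 := cL (inr (j, true)); have h2 := cL (inr (j, false)).
  move: h1 h2; rewrite /= !inE mem_filter !mem_iota e.
  have hj := ltn_ord j.
  move=> g1 g2.
  have H : c' (inr (j, false)) = j.
    move: g1 g2; move: (c' (inr (j, false))) => x.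
    move=> /orP[/eqP h|/orP[/eqP h|/and3P[_ _ h]]] /orP[/eqP h2|/andP[h2 h3]] //; lia.
  by case; rewrite ?e H.
move=> [i|[j b]]; last by rewrite pairs.
have := cL (inl i); rewrite /= inE mem_iota => /orP[/eqP //|/andP[_ h]].
have h' : c' (inl i) < k.-1 by [].
have : Kadj (inl i) (inr (Ordinal h', false)) by [].
by move/cP; rewrite pairs /= eqxx.
Qed.

Lemma K_UkLC k : 1 <= k -> UkLC (@Kadj k) k.
Proof.
move=> k1; exists (@KL k); split; first exact: KL_assign.
exists (@Kc k); split; first exact: Kc_col.
by move=> c' Hc' v; apply: Kc_uniq.
Qed.

Lemma K_M k : 1 <= k -> property_M (@Kadj k) k.+1.
Proof.
move=> k1 [L [HL [c [[cL cP] cU]]]].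
have HS : forall v, v \in [set: Kvert k] -> uniq (L v) /\ k.+1 <= size (L v).
  by move=> v _; have [u s] := HL v; rewrite s.
have HU : Huniq [set: Kvert k] L c.
  move=> c' h1 h2 v _; apply: cU; split; first by move=> u; apply: h1.
  by move=> u w a; apply: h2 => //; apply: cP.
have w0 : (inl (Ordinal k1) : Kvert k) \in [set: Kvert k] by rewrite inE.
have := key HS (fun v _ => cL v) HU w0.
rewrite [(k.+1).-1]/=.
have sub : Pr [set: Kvert k] c \subset [set inr p | p : ('I_k.-1 * bool)%type].
  apply/subsetP => [[i|p]]; last by move=> _; apply: imset_f.
  rewrite inE => /andP[_ /existsP[u /andP[_ /andP[ui cui]]]].
  have : Kadj u (inl i).
    case: u ui {cui} => [i'|p'] //= ui; rewrite /Kadj /=.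
  by move/cP; rewrite cui.
have := subset_leq_card sub.
rewrite card_imset; last exact: inr_inj.
rewrite card_prod card_ord card_bool.
lia.
Qed.

Theorem mainTheorem15 :
  forall k : nat, 1 <= k -> is_m_number (@Kadj k) k.+1.
Proof.
move=> k k1; split => //; split; first exact: K_M.
move=> j j1 jk; rewrite /property_M => H; apply: H.
apply: (shrinkU j1 _ (K_UkLC k1)); by [].
Qed.
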